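(* Let $Q\in\mathbb{S}^n$ with $Q_i>0$ for all $i$, and let $\widehat{P}\in\mathbb{S}^n$. Suppose the indices can be labeled so that $\frac{\widehat{P}_\ell}{Q_\ell}<\frac{\widehat{P}_k}{Q_k}\le\frac{\widehat{P}_i}{Q_i}$ for all $i\neq\ell$ (i.e. $\ell$ is the unique index minimizing $\widehat{P}_i/Q_i$ and $k$ attains the second smallest ratio). Then for every $\alpha\in[0,1)$ with $$1-\widehat{P}_\ell-\frac{\widehat{P}_k}{Q_k}(1-Q_\ell)\ \le\ \alpha\ \le\ \kappa(\widehat{P}\,\|\,Q),$$ the vector $$P^*_i=\begin{cases}\dfrac{Q_i\left(1-\frac{\widehat{P}_\ell}{1-\alpha}\right)}{1-Q_\ell}, & i\neq\ell,\\[2mm] \dfrac{\widehat{P}_\ell}{1-\alpha}, & i=\ell,\end{cases}$$ is the unique solution of the optimization problem $$\min_{P\in\mathbb{S}^n}\ \sum_iP_i\log\frac{P_i}{Q_i}\quad\text{subject to}\quad P_i\le\frac{\widehat{P}_i}{1-\alpha},\ i=1,\dots,n.$$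
   Context: $\mathbb{S}^n=\{P\in\mathbb{R}^n:\sum_iP_i=1,\ P_i\ge0\}$. The separation distance is $\kappa(\widehat{P}\|Q)=\max_{i}\left(1-\frac{\widehat{P}_i}{Q_i}\right)$, which here equals $1-\widehat{P}_\ell/Q_\ell$. *)

(* Defs.v *)
From HB Require Import structures.
From mathcomp Require Import all_boot all_order all_algebra.
From mathcomp Require Import all_classical all_reals all_analysis.
Set Implicit Arguments. Unset Strict Implicit. Unset Printing Implicit Defensive.
Import Order.TTheory GRing.Theory Num.Theory.
Local Open Scope ring_scope.

Definition simplex {R : realType} (n : nat) (P : 'I_n -> R) : Prop :=
  (forall i, 0 <= P i) /\ \sum_(i < n) P i = 1.

(* KL divergence sum_i P_i log (P_i/Q_i); with 0 * ln _ = 0 this realises 0 log 0 = 0 *)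
Definition KL {R : realType} (n : nat) (P Q : 'I_n -> R) : R :=
  \sum_(i < n) P i * ln (P i / Q i).

(* separation distance kappa(P||Q) = max_i (1 - P_i/Q_i).  The neutral element 0
   is harmless for P, Q in the simplex (the max is then >= 0). *)
Definition kappa {R : realType} (n : nat) (P Q : 'I_n -> R) : R :=
  \big[Num.max/0]_(i < n) (1 - P i / Q i).

Definition feasible {R : realType} (n : nat) (Phat : 'I_n -> R) (alpha : R)
  (P : 'I_n -> R) : Prop :=
  simplex P /\ forall i, P i <= Phat i / (1 - alpha).

Definition unique_minimizer {R : realType} (n : nat) (Phat Q : 'I_n -> R)
  (alpha : R) (Pstar : 'I_n -> R) : Prop :=
  feasible Phat alpha Pstar /\
  forall P, feasible Phat alpha P -> P <> Pstar -> KL Pstar Q < KL P Q.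

(* Main.v *)
Require Import Defs.
From HB Require Import structures.
From mathcomp Require Import all_boot all_order all_algebra.
From mathcomp Require Import all_classical all_reals all_analysis.
From mathcomp Require Import ring lra.
Import Order.TTheory GRing.Theory Num.Theory.
Local Open Scope ring_scope.



Lemma ln_le_sub1 {R : realType} (x : R) : 0 < x -> ln x <= x - 1.
Proof.
move=> x0; rewrite lerBrDl -[X in _ <= X](lnK (x:=x)) ?posrE //.
exact: expR_ge1Dx.
Qed.

Lemma ln_lt_sub1 {R : realType} (x : R) : 0 < x -> x != 1 -> ln x < x - 1.
Proof.
move=> x0 x1; rewrite ltrBrDl -[X in _ < X](lnK (x:=x)) ?posrE //.
apply: expR_gt1Dx; by rewrite ln_eq0.
Qed.

Lemma plnle {R : realType} (p r : R) : 0 < p -> 0 < r -> p * ln (r / p) <= r - p.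
Proof.
move=> p0 r0; have := @ln_le_sub1 _ (r/p) (divr_gt0 r0 p0).
rewrite -(ler_pM2l p0) => /le_trans; apply.
by rewrite mulrBr mulrCA divff ?gt_eqF // mulr1 mulr1.
Qed.

Lemma plnlt {R : realType} (p r : R) : 0 < p -> 0 < r -> p != r -> p * ln (r / p) < r - p.
Proof.
move=> p0 r0 pr; have := @ln_lt_sub1 _ (r/p) (divr_gt0 r0 p0).
have -> : (r / p != 1).
  apply/eqP => h; move/eqP: pr; apply; move: h.
  by move/(congr1 (fun z => z * p)); rewrite mulrVK ?unitfE ?gt_eqF // mul1r.
move=> /(_ isT); rewrite -(ltr_pM2l p0) => /lt_le_trans; apply.
by rewrite mulrBr mulrCA divff ?gt_eqF // mulr1 mulr1.
Qed.

Lemma term_le {R : realType} (q p r : R) : 0 < q -> 0 <= p -> 0 <= r -> (r = 0 -> p = 0) ->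
  (ln (r / q) + 1) * (p - r) <= p * ln (p / q) - r * ln (r / q)
  /\ (p != r -> (ln (r / q) + 1) * (p - r) < p * ln (p / q) - r * ln (r / q)).
Proof.
move=> q0 p0 r0 rp.
have [r0e|rn0] := eqVneq r 0.
  by rewrite (rp r0e) r0e subrr mulr0 mul0r subrr lexx eqxx.
have rpos : 0 < r by rewrite lt_def rn0.
have [->|pn0] := eqVneq p 0.
  rewrite !mul0r sub0r; split => [|_]; [apply: ltW|]; lra.
have ppos : 0 < p by rewrite lt_def pn0 p0.
have e : ln (p / q) = - ln (r / p) + ln (r / q).
  rewrite -lnV ?posrE ?divr_gt0 // invf_div -lnM ?posrE ?divr_gt0 //.
  congr ln; field; rewrite gt_eqF //.
rewrite e; have h1 := @plnle _ p r ppos rpos; have h2 := @plnlt _ p r ppos rpos.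
split => [|/h2 h]; lra.
Qed.


Theorem theorem5 (R : realType) (n : nat) (Q Phat : 'I_n -> R) (l k : 'I_n)
  (alpha : R) :
  simplex Q -> (forall i, 0 < Q i) -> simplex Phat ->
  Phat l / Q l < Phat k / Q k ->
  (forall i, i != l -> Phat k / Q k <= Phat i / Q i) ->
  0 <= alpha -> alpha < 1 ->
  1 - Phat l - Phat k / Q k * (1 - Q l) <= alpha ->
  alpha <= kappa Phat Q ->
  unique_minimizer Phat Q alpha
    (fun i => if i == l then Phat l / (1 - alpha)
              else Q i * (1 - Phat l / (1 - alpha)) / (1 - Q l)).
Proof.
move=> [Q0 Q1] Qpos [P0 P1] hlk hk a0 a1 hlow hup.
have ha : 0 < 1 - alpha by lra.
have kl : k != l by apply/eqP => e; move: hlk; rewrite e ltxx.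
have rl : forall i, Phat l / Q l <= Phat i / Q i.
  move=> i; have [->|il] := eqVneq i l; first exact: lexx.
  exact: le_trans (ltW hlk) (hk i il).
have rl1 : Phat l / Q l <= 1.
  have : \sum_(i < n) Phat l / Q l * Q i <= \sum_(i < n) Phat i.
    apply: ler_sum => i _; have h := rl i.
    by rewrite -(ler_pM2r (Qpos i)) divfK ?gt_eqF // in h.
  by rewrite -mulr_sumr Q1 P1 mulr1.
have hkap : kappa Phat Q <= 1 - Phat l / Q l.
  rewrite /kappa; apply: (big_ind (fun x => x <= 1 - Phat l / Q l)).
  - lra.
  - by move=> x y hx hy; rewrite ge_max hx hy.
  - move=> i _; have := rl i; lra.
set c := Phat l / (1 - alpha).
have c0 : 0 <= c by rewrite /c divr_ge0 // ?P0 // ltW.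
have cQ : c <= Q l.
  rewrite /c ler_pdivrMr //.
  have : Phat l / Q l <= 1 - alpha by lra.
  by rewrite ler_pdivrMr // mulrC.
have sumQ : Q l + \sum_(i < n | i != l) Q i = 1.
  by move: Q1; rewrite (bigD1 l).
have sumP : Phat l + \sum_(i < n | i != l) Phat i = 1.
  by move: P1; rewrite (bigD1 l).
have Qk : Q k <= \sum_(i < n | i != l) Q i.
  rewrite (bigD1 k) //= lerDl; apply: sumr_ge0 => i _; exact: ltW.
have hQl : 0 < 1 - Q l by have := Qpos k; lra.
have hs : 0 < 1 - c by lra.
set Ps := fun i => if i == l then c else Q i * (1 - c) / (1 - Q l).
have Psl : Ps l = c by rewrite /Ps eqxx.
have Psi : forall i, i != l -> Ps i = Q i * (1 - c) / (1 - Q l).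
  by move=> i il; rewrite /Ps (negbTE il).
have Pspos : forall i, i != l -> 0 < Ps i.
  move=> i il; rewrite Psi // divr_gt0 // mulr_gt0 //.
have feas : feasible Phat alpha Ps.
  split; first split.
  - move=> i; have [->|il] := eqVneq i l; first by rewrite Psl.
    exact: ltW (Pspos i il).
  - rewrite (bigD1 l) //= Psl.
    rewrite (eq_bigr (fun i => Q i * ((1 - c) / (1 - Q l)))); last first.
      by move=> i il; rewrite Psi // mulrA.
    rewrite -mulr_suml.
    have -> : \sum_(i < n | i != l) Q i = 1 - Q l by lra.
    field; rewrite gt_eqF //.
  - move=> i; have [->|il] := eqVneq i l; first by rewrite Psl.
    rewrite Psi //.
    have hX : 1 - alpha - Phat l <= Phat i / Q i * (1 - Q l).
      have := hk i il; rewrite -(ler_pM2r hQl) => h; lra.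
    have e1 : Q i * (1 - c) / (1 - Q l)
        = (Q i / ((1 - alpha) * (1 - Q l))) * (1 - alpha - Phat l).
      rewrite /c; field; rewrite !gt_eqF //.
    have e2 : Phat i / (1 - alpha)
        = (Q i / ((1 - alpha) * (1 - Q l))) * (Phat i / Q i * (1 - Q l)).
      field; rewrite !gt_eqF //.
    rewrite e1 e2; apply: ler_wpM2l hX.
    by rewrite divr_ge0 // ?mulr_ge0 // ltW.
split; first exact: feas.
move=> P [[Pn Ps1] Pb] PneP.
have Plc : P l <= c := Pb l.
have [j Hj] : exists j, P j != Ps j.
  case: (pselect (exists j, P j != Ps j)) => // nex; exfalso; apply: PneP.
  apply: funext => j; apply/eqP/negPn/negP => h; apply: nex; by exists j.
pose T i := (ln (Ps i / Q i) + 1) * (P i - Ps i).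
have hT : forall i, T i <= P i * ln (P i / Q i) - Ps i * ln (Ps i / Q i)
   /\ (P i != Ps i -> T i < P i * ln (P i / Q i) - Ps i * ln (Ps i / Q i)).
  move=> i; apply: term_le => //.
  - have [->|il] := eqVneq i l; first by rewrite Psl.
    exact: ltW (Pspos i il).
  - have [->|il] := eqVneq i l.
      rewrite Psl => hc; apply/le_anti; rewrite Pn andbT -hc; exact: Plc.
    by move=> h; move: (Pspos i il); rewrite h ltxx.
have sumT : 0 <= \sum_(i < n) T i.
  set A := ln ((1 - c) / (1 - Q l)).
  set B := ln (c / Q l).
  have sumPo : \sum_(i < n | i != l) P i = 1 - P l.
    by move: Ps1; rewrite (bigD1 l) //= => h; lra.
  rewrite (bigD1 l) //=.
  rewrite (eq_bigr (fun i => (A + 1) * (P i - Q i * ((1 - c) / (1 - Q l))))); last first.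
    move=> i il.
    have e : Q i * (1 - c) / (1 - Q l) / Q i = (1 - c) / (1 - Q l).
      field; rewrite !gt_eqF //.
    by rewrite /T Psi // e mulrA.
  rewrite -mulr_sumr sumrB -mulr_suml sumPo.
  have -> : \sum_(i < n | i != l) Q i = 1 - Q l by lra.
  rewrite /T Psl -/B.
  have -> : (1 - Q l) * ((1 - c) / (1 - Q l)) = 1 - c.
    field; rewrite gt_eqF //.
  have -> : (B + 1) * (P l - c) + (A + 1) * (1 - P l - (1 - c))
     = (B - A) * (P l - c) by ring.
  apply: mulr_le0; last lra.
  have hB : B <= 0 by apply: ln_le0; rewrite ler_pdivrMr // mul1r.
  have hA : 0 <= A by apply: ln_ge0; rewrite ler_pdivlMr // mul1r; lra.
  lra.
rewrite /KL -subr_gt0 -sumrB.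
apply: le_lt_trans sumT _.
rewrite (bigD1 j) //= [X in _ < X](bigD1 j) //=.
apply: ltr_leD; first exact: (hT j).2 Hj.
apply: ler_sum => i _; exact: (hT i).1.
Qed.
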